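(* Let $\Gamma_{\ge1}$ be a set of letters of arity at least $1$ and $\Gamma_0$ a set of constants, and consider the following nondeterministic procedure on a context equation $u=v$. (1) For each variable $x$: guess whether $x$ is to be replaced by a constant and if so guess a constant $c\in\Gamma_0$ and replace every occurrence of $x$ by $c$. (2) For each context variable $X$: guess a letter $f$ (intended as the last letter of $\sigma(X)$); if $f\in\Gamma_{\ge1}$ and the current equation contains a subterm $X(a)$ with $a\in\Gamma_0$, let $m=\mathrm{ar}(f)$, guess $1\le i\le m$, and replace every subterm $X(s)$ by $X(f(x_1,\dots,x_{i-1},s,x_{i+1},\dots,x_m))$ with fresh variables $x_1,\dots,x_{i-1},x_{i+1},\dots,x_m$ (the same for all occurrences of $X$); then guess whether $X$ is removed, in which case replace each $X(s)$ by $s$. (3) For each variable introduced in step (2), act as in step (1). Then: (a) whatever the choices, if the resulting equation $u'=v'$ has a solution, so does $u=v$; (b) if $u=v$ has a non-empty solution $\sigma$, then for some choices the resulting equation $u'=v'$ has a non-empty solution $\sigma'$ such that $\sigma'(u')=\sigma(u)$ and there is no crossing father-leaf pair $(f,a)$ with $f\in\Gamma_{\ge1}$ and $a\in\Gamma_0$ with respect to $\sigma'$.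
   Context: $\Sigma$ is a ranked signature, $\Omega\notin\Sigma$ a special constant; context variables have arity $1$, variables arity $0$. Ground terms, ground contexts (exactly one $\Omega$), terms and context equations $u=v$ are as usual; a substitution $\sigma$ assigns ground contexts to context variables and ground terms to variables, extended by $\sigma(a)=a$, $\sigma(f(t_1,\dots,t_m))=f(\sigma(t_1),\dots,\sigma(t_m))$, $\sigma(Xt)=\sigma(X)\sigma(t)$; a solution satisfies $\sigma(u)=\sigma(v)$; it is non-empty if $\sigma(X)\neq\Omega$ for every context variable $X$ occurring in the equation. The last letter of $\sigma(X)$ is the label of the father of $\Omega$ in $\sigma(X)$. Each node of $\sigma(u)$ comes either from an explicit letter occurrence of $u$ or from $\sigma(X)$ or $\sigma(x)$ for a particular occurrence of $X$ or $x$. An occurrence in $\sigma(u)$ or $\sigma(v)$ of a node labelled $f$ ($\mathrm{ar}(f)\ge1$) with a child labelled by a constant $a$ is explicit if both come from explicit letters, implicit if both come from the same $\sigma(X)$ or $\sigma(x)$, and crossing otherwise; $(f,a)$ is a crossing father-leaf pair w.r.t. $\sigma$ if it has a crossing occurrence. *)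

(* Defs.v *)
From Stdlib Require Import List Arith.
Import ListNotations.
Set Implicit Arguments.

Section Defs.
(* Ranked signature Sigma: letters of type L with arity ar.
   The special constant Omega is represented by [None] in ground trees.
   Variables and context variables are named by natural numbers. *)
Variable L : Type.
Variable ar : L -> nat.

Inductive gtree : Type := gnode : option L -> list gtree -> gtree.

Inductive wf_g : gtree -> Prop :=
| wfg_omega : wf_g (gnode None [])
| wfg_node f ts : length ts = ar f -> (forall t, In t ts -> wf_g t) ->
                  wf_g (gnode (Some f) ts).

Fixpoint holes (t : gtree) : nat :=
  match t with
  | gnode o ts => (match o with None => 1 | Some _ => 0 end)
                  + list_sum (map holes ts)
  end.

Definition is_gterm (t : gtree) : Prop := wf_g t /\ holes t = 0.
Definition is_gctx (t : gtree) : Prop := wf_g t /\ holes t = 1.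
Definition Omega : gtree := gnode None [].

Fixpoint plug (c s : gtree) : gtree :=
  match c with
  | gnode None _ => s
  | gnode (Some f) cs => gnode (Some f) (map (fun c' => plug c' s) cs)
  end.

Inductive term : Type :=
| Var : nat -> term
| CVar : nat -> term -> term
| App : L -> list term -> term.

Inductive wf_t : term -> Prop :=
| wft_var x : wf_t (Var x)
| wft_cvar X t : wf_t t -> wf_t (CVar X t)
| wft_app f ts : length ts = ar f -> (forall t, In t ts -> wf_t t) ->
                 wf_t (App f ts).

Inductive subterm : term -> term -> Prop :=
| st_refl t : subterm t t
| st_cvar s X t : subterm s t -> subterm s (CVar X t)
| st_app s f ts t : In t ts -> subterm s t -> subterm s (App f ts).

Definition eqn : Type := (term * term)%type.
Definition map_eq (F : term -> term) (e : eqn) : eqn := (F (fst e), F (snd e)).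
Definition subterm_eq (s : term) (e : eqn) : Prop :=
  subterm s (fst e) \/ subterm s (snd e).
Definition occurs_var (x : nat) (e : eqn) : Prop := subterm_eq (Var x) e.
Definition occurs_cvar (X : nat) (e : eqn) : Prop :=
  exists s, subterm_eq (CVar X s) e.

Record subst : Type := Subst { sX : nat -> gtree ; sx : nat -> gtree }.

Definition valid_subst (s : subst) : Prop :=
  (forall X, is_gctx (sX s X)) /\ (forall x, is_gterm (sx s x)).

Fixpoint apply (s : subst) (t : term) : gtree :=
  match t with
  | Var x => sx s x
  | CVar X t' => plug (sX s X) (apply s t')
  | App f ts => gnode (Some f) (map (apply s) ts)
  end.

Definition solution (s : subst) (e : eqn) : Prop :=
  valid_subst s /\ apply s (fst e) = apply s (snd e).

Definition nonempty_solution (s : subst) (e : eqn) : Prop :=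
  solution s e /\ forall X, occurs_cvar X e -> sX s X <> Omega.

(* A node of sigma(u) comes from an explicit letter of u ([Expl]) or from
   sigma(X) / sigma(x) for the occurrence of X / x at position p of u. *)
Inductive origin : Type := Expl | Occ : list nat -> origin.

Inductive atree : Type := anode : option L -> origin -> list atree -> atree.

Fixpoint ann (o : origin) (t : gtree) : atree :=
  match t with gnode l ts => anode l o (map (ann o) ts) end.

Fixpoint aplug (c s : atree) : atree :=
  match c with
  | anode None _ _ => s
  | anode (Some f) o cs => anode (Some f) o (map (fun c' => aplug c' s) cs)
  end.

(* annotated evaluation of sigma(t), t sitting at position p;
   the argument of a context variable is its child 0, the arguments of
   a letter are its children 0,1,... *)
Fixpoint aeval (s : subst) (p : list nat) (t : term) : atree :=
  match t with
  | Var x => ann (Occ p) (sx s x)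
  | CVar X t' => aplug (ann (Occ p) (sX s X)) (aeval s (p ++ [0]) t')
  | App f ts =>
      anode (Some f) Expl
        ((fix go (i : nat) (l : list term) : list atree :=
            match l with
            | [] => []
            | t' :: l' => aeval s (p ++ [i]) t' :: go (S i) l'
            end) 0 ts)
  end.

Inductive asubtree : atree -> atree -> Prop :=
| ast_refl t : asubtree t t
| ast_child s l o ts t : In t ts -> asubtree s t -> asubtree s (anode l o ts).

Definition explicit_occ (o o' : origin) : Prop := o = Expl /\ o' = Expl.
Definition implicit_occ (o o' : origin) : Prop :=
  exists p, o = Occ p /\ o' = Occ p.

Definition crossing_in (T : atree) (f a : L) : Prop :=
  1 <= ar f /\ ar a = 0 /\
  exists o ts o' ds,
    asubtree (anode (Some f) o ts) T /\ In (anode (Some a) o' ds) ts /\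
    ~ explicit_occ o o' /\ ~ implicit_occ o o'.

Definition crossing_pair (s : subst) (e : eqn) (f a : L) : Prop :=
  crossing_in (aeval s [] (fst e)) f a \/ crossing_in (aeval s [] (snd e)) f a.

Variables (G1 G0 : L -> Prop).

Fixpoint substV (ch : nat -> option L) (t : term) : term :=
  match t with
  | Var x => match ch x with Some c => App c [] | None => Var x end
  | CVar X t' => CVar X (substV ch t')
  | App f ts => App f (map (substV ch) ts)
  end.

Fixpoint popX (X : nat) (f : L) (i : nat) (ys : list nat) (t : term) : term :=
  match t with
  | Var x => Var x
  | CVar Y t' =>
      let t'' := popX X f i ys t' in
      if Nat.eqb Y X then
        CVar X (App f (firstn (i - 1) (map Var ys) ++ t'' :: skipn (i - 1) (map Var ys)))
      else CVar Y t''
  | App g ts => App g (map (popX X f i ys) ts)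
  end.

Fixpoint remX (X : nat) (t : term) : term :=
  match t with
  | Var x => Var x
  | CVar Y t' => if Nat.eqb Y X then remX X t' else CVar Y (remX X t')
  | App g ts => App g (map (remX X) ts)
  end.

Definition has_Xa (X : nat) (e : eqn) : Prop :=
  exists a, G0 a /\ subterm_eq (CVar X (App a [])) e.

Definition pop_step (X : nat) (e : eqn) (nv : list nat) (e' : eqn) : Prop :=
  exists (f : L) (b : bool) (e1 : eqn),
    ( (G1 f /\ has_Xa X e /\
       exists i, 1 <= i <= ar f /\ length nv = ar f - 1 /\ NoDup nv /\
                 (forall y, In y nv -> ~ occurs_var y e) /\
                 e1 = map_eq (popX X f i nv) e)
      \/ (~ (G1 f /\ has_Xa X e) /\ nv = [] /\ e1 = e) ) /\
    e' = (if b then map_eq (remX X) e1 else e1).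

Inductive pop_all : list nat -> eqn -> list nat -> eqn -> Prop :=
| pa_nil e : pop_all [] e [] e
| pa_cons X Xs e e1 e2 nv nv' :
    pop_step X e nv e1 -> pop_all Xs e1 nv' e2 -> pop_all (X :: Xs) e (nv ++ nv') e2.

Definition restrict (nv : list nat) (ch : nat -> option L) (x : nat) : option L :=
  if existsb (Nat.eqb x) nv then ch x else None.

Definition proc (e e' : eqn) : Prop :=
  exists (ch1 : nat -> option L) (ord : list nat) (e1 e2 : eqn)
         (nv : list nat) (ch3 : nat -> option L),
    (forall x c, ch1 x = Some c -> G0 c) /\
    e1 = map_eq (substV ch1) e /\
    NoDup ord /\ (forall X, In X ord <-> occurs_cvar X e) /\
    pop_all ord e1 nv e2 /\
    (forall x c, ch3 x = Some c -> G0 c) /\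
    e' = map_eq (substV (restrict nv ch3)) e2.

End Defs.

(* Main.v *)
Require Import Defs.
From Stdlib Require Import List Arith Lia.
From Stdlib Require Import FunctionalExtensionality Classical ClassicalEpsilon.
Import ListNotations.
Local Arguments Var {L} _.

Section Main.
Variable L : Type.
Variable ar : L -> nat.

Definition term_ind' (P : term L -> Prop)
  (HV : forall x, P (Var x))
  (HC : forall X t, P t -> P (CVar X t))
  (HA : forall f ts, Forall P ts -> P (App f ts)) : forall t, P t :=
  fix F (t : term L) : P t :=
    match t with
    | Var x => HV x
    | CVar X t' => HC X t' (F t')
    | App f ts => HA f ts ((fix G (l : list (term L)) : Forall P l :=
                    match l with [] => Forall_nil _ | a :: l' => Forall_cons _ (F a) (G l') end) ts)
    end.

Definition gtree_ind' (P : gtree L -> Prop)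
  (H : forall o ts, Forall P ts -> P (gnode o ts)) : forall t, P t :=
  fix F (t : gtree L) : P t :=
    match t with
    | gnode o ts => H o ts ((fix G (l : list (gtree L)) : Forall P l :=
                    match l with [] => Forall_nil _ | a :: l' => Forall_cons _ (F a) (G l') end) ts)
    end.

Definition atree_ind' (P : atree L -> Prop)
  (H : forall l o ts, Forall P ts -> P (anode l o ts)) : forall t, P t :=
  fix F (t : atree L) : P t :=
    match t with
    | anode l o ts => H l o ts ((fix G (k : list (atree L)) : Forall P k :=
                    match k with [] => Forall_nil _ | a :: l' => Forall_cons _ (F a) (G l') end) ts)
    end.

Lemma In_firstn {A} n (l : list A) x : In x (firstn n l) -> In x l.
Proof. intros H. rewrite <- (firstn_skipn n l). apply in_app_iff; auto. Qed.
Lemma In_skipn {A} n (l : list A) x : In x (skipn n l) -> In x l.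
Proof. intros H. rewrite <- (firstn_skipn n l). apply in_app_iff; auto. Qed.

Lemma list_sum_In_le (l : list nat) x : In x l -> x <= list_sum l.
Proof. induction l; simpl; intros H; [contradiction|]. destruct H; subst; [lia|]. specialize (IHl H); lia. Qed.

Lemma list_sum_zero (l : list nat) : (forall x, In x l -> x = 0) -> list_sum l = 0.
Proof. induction l; simpl; intros H; auto. rewrite (H a), IHl; auto. Qed.

Lemma plug_ground (g r : gtree L) : holes g = 0 -> plug g r = g.
Proof.
  revert g. refine (gtree_ind' _ _). intros o ts IH H. destruct o as [f|]; simpl in *; [|lia].
  f_equal. rewrite <- (map_id ts) at 2. apply map_ext_in. intros c Hc.
  rewrite Forall_forall in IH. apply IH; auto.
  pose proof (list_sum_In_le (map (@holes L) ts) (holes c) (in_map (@holes L) _ _ Hc)). lia.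
Qed.

Lemma plug_assoc (c d r : gtree L) : plug (plug c d) r = plug c (plug d r).
Proof.
  revert c. refine (gtree_ind' _ _). intros o ts IH. destruct o as [f|]; simpl; auto.
  f_equal. rewrite map_map. apply map_ext_in. intros x Hx. rewrite Forall_forall in IH; auto.
Qed.

Lemma plug_wf (c d : gtree L) : wf_g ar c -> wf_g ar d ->
  wf_g ar (plug c d) /\ holes (plug c d) = holes c * holes d.
Proof.
  intros Hc Hd. induction Hc as [|f ts Hl Hts IH]; simpl.
  - split; auto.
  - split.
    + constructor. rewrite length_map; auto. intros t Ht. apply in_map_iff in Ht.
      destruct Ht as [x [<- Hx]]. apply IH; auto.
    + rewrite map_map. clear Hl Hts. induction ts; simpl; auto.
      rewrite (proj2 (IH a (or_introl eq_refl))). rewrite IHts; [lia|].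
      intros t Ht. apply IH; simpl; auto.
Qed.


Definition subch (s : subst L) (ch : nat -> option L) : subst L :=
  Subst (sX s) (fun x => match ch x with Some c => gnode (Some c) [] | None => sx s x end).

Definition mid (f : L) (i : nat) (T : list (gtree L)) : gtree L :=
  gnode (Some f) (firstn (i - 1) T ++ Omega L :: skipn (i - 1) T).

Definition popsub (s : subst L) X f i (ys : list nat) : subst L :=
  Subst (fun Y => if Nat.eqb Y X then plug (sX s X) (mid f i (map (sx s) ys)) else sX s Y) (sx s).

Definition remsub (s : subst L) X : subst L :=
  Subst (fun Y => if Nat.eqb Y X then Omega L else sX s Y) (sx s).

Lemma apply_substV s ch t : apply s (substV ch t) = apply (subch s ch) t.
Proof.
  revert t; refine (term_ind' _ _ _ _); simpl; intros.
  - destruct (ch x); auto.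
  - rewrite H; auto.
  - f_equal. rewrite map_map. apply map_ext_in. intros. rewrite Forall_forall in H; auto.
Qed.

Lemma apply_popX s X f i ys t : (forall y, holes (sx s y) = 0) ->
  apply s (popX X f i ys t) = apply (popsub s X f i ys) t.
Proof.
  intros Hg. revert t; refine (term_ind' _ _ _ _); simpl; intros.
  - auto.
  - destruct (Nat.eqb_spec X0 X).
    + subst. simpl. rewrite plug_assoc. f_equal. unfold mid. simpl. f_equal.
      rewrite !map_app. simpl. rewrite H. f_equal.
      * rewrite !firstn_map, !map_map. apply map_ext_in. intros.
        rewrite plug_ground; auto.
      * f_equal. rewrite !skipn_map, !map_map. apply map_ext_in. intros.
        rewrite plug_ground; auto.
    + simpl. rewrite H. auto.
  - f_equal. rewrite map_map. apply map_ext_in. intros. rewrite Forall_forall in H; auto.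
Qed.

Lemma apply_remX s X t : apply s (remX X t) = apply (remsub s X) t.
Proof.
  revert t; refine (term_ind' _ _ _ _); simpl; intros.
  - auto.
  - destruct (Nat.eqb_spec X0 X); simpl; rewrite H; auto.
  - f_equal. rewrite map_map. apply map_ext_in. intros. rewrite Forall_forall in H; auto.
Qed.

Lemma Omega_gctx : is_gctx ar (Omega L).
Proof. split; [constructor|reflexivity]. Qed.

Lemma mid_wf f i T : 1 <= i <= ar f -> length T = ar f - 1 ->
  (forall t, In t T -> is_gterm ar t) -> is_gctx ar (mid f i T).
Proof.
  intros Hi Hl HT. split.
  - constructor.
    + rewrite length_app, length_firstn. simpl. rewrite length_skipn. lia.
    + intros t Ht. apply in_app_iff in Ht. destruct Ht as [Ht|[<-|Ht]].
      * apply HT. eapply In_firstn; eauto. 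
      * constructor.
      * apply HT. eapply In_skipn; eauto.
  - simpl. rewrite map_app, list_sum_app. simpl.
    rewrite !list_sum_zero; auto; intros x Hx; apply in_map_iff in Hx; destruct Hx as [y [<- Hy]].
    + apply HT. eapply In_skipn; eauto.
    + apply HT. eapply In_firstn; eauto.
Qed.

Lemma popsub_valid s X f i ys : valid_subst ar s -> 1 <= i <= ar f -> length ys = ar f - 1 ->
  valid_subst ar (popsub s X f i ys).
Proof.
  intros [HX Hx] Hi Hl. split; simpl; auto. intros Y. destruct (Nat.eqb Y X); auto.
  destruct (HX X) as [w1 h1]. destruct (mid_wf f i (map (sx s) ys)) as [w2 h2]; auto.
  - rewrite length_map; auto.
  - intros t Ht. apply in_map_iff in Ht. destruct Ht as [y [<- _]]. auto.
  - destruct (plug_wf _ _ w1 w2). split; auto. rewrite H0, h1, h2. auto.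
Qed.

Lemma remsub_valid s X : valid_subst ar s -> valid_subst ar (remsub s X).
Proof.
  intros [HX Hx]. split; simpl; auto. intros Y. destruct (Nat.eqb Y X); auto. apply Omega_gctx.
Qed.


Variables G1 G0 : L -> Prop.
Hypothesis hG1 : forall f, G1 f -> 1 <= ar f.
Hypothesis hG0 : forall c, G0 c -> ar c = 0.

Lemma pop_step_back X e nv e' s : pop_step ar G1 G0 X e nv e' -> solution ar s e' ->
  exists s0, solution ar s0 e.
Proof.
  intros [f [b [e1 [H He']]]] Hs.
  assert (Hs1 : exists s1, solution ar s1 e1).
  { destruct b; subst e'.
    - exists (remsub s X). destruct Hs as [Hv Ha]. split; [apply remsub_valid; auto|].
      simpl in Ha. rewrite !apply_remX in Ha. auto.
    - exists s; auto. }
  clear s Hs He'. destruct Hs1 as [s1 [Hv Ha]].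
  destruct H as [[Hf [Hx [i [Hi [Hl [Hnd [Hfr He1]]]]]]] | [_ [_ He1]]]; subst e1.
  - exists (popsub s1 X f i nv). split; [apply popsub_valid; auto|].
    simpl in Ha. rewrite !apply_popX in Ha; auto; intros y; apply (proj2 Hv y).
  - exists s1; split; auto.
Qed.

Lemma pop_all_back ord e nv e' : pop_all ar G1 G0 ord e nv e' ->
  forall s, solution ar s e' -> exists s0, solution ar s0 e.
Proof.
  induction 1; intros s Hs; eauto.
  destruct (IHpop_all s Hs) as [s1 Hs1]. eapply pop_step_back; eauto.
Qed.

Lemma subch_valid s ch : valid_subst ar s -> (forall x c, ch x = Some c -> G0 c) ->
  valid_subst ar (subch s ch).
Proof.
  intros [HX Hx] Hch. split; simpl; auto. intros x. destruct (ch x) eqn:E; auto.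
  split; auto. constructor; auto. rewrite (hG0 _ (Hch _ _ E)). reflexivity.
  intros t [].
Qed.

Lemma restrict_G0 nv ch : (forall x c, ch x = Some c -> G0 c) ->
  forall x c, restrict nv ch x = Some c -> G0 c.
Proof. unfold restrict. intros H x c. destruct existsb; eauto. discriminate. Qed.

Lemma partA u v u' v' : proc ar G1 G0 (u, v) (u', v') ->
  (exists s', solution ar s' (u', v')) -> exists s, solution ar s (u, v).
Proof.
  intros [ch1 [ord [e1 [e2 [nv [ch3 [Hc1 [He1 [_ [_ [Hpa [Hc3 He']]]]]]]]]]]] [s' [Hv Ha]].
  assert (Hs2 : solution ar (subch s' (restrict nv ch3)) e2).
  { split. apply subch_valid; auto. apply restrict_G0; auto.
    injection He'; intros -> ->. simpl in Ha. rewrite !apply_substV in Ha. auto. }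
  destruct (pop_all_back _ _ _ _ Hpa _ Hs2) as [s1 [Hv1 Ha1]].
  exists (subch s1 ch1). split. apply subch_valid; auto.
  subst e1. simpl in Ha1. rewrite !apply_substV in Ha1. auto.
Qed.


Definition rootl (g : gtree L) : option L := match g with gnode l _ => l end.
Definition arootl (g : atree L) : option L := match g with anode l _ _ => l end.
Definition aorig (g : atree L) : origin := match g with anode _ o _ => o end.

Inductive gsub : gtree L -> gtree L -> Prop :=
| gs_refl t : gsub t t
| gs_child s l ts t : In t ts -> gsub s t -> gsub s (gnode l ts).

Definition hole_parent (g : gtree L) (f : L) : Prop :=
  exists cs ds, gsub (gnode (Some f) cs) g /\ In (gnode None ds) cs.

Definition P1 (s : subst L) (t : term L) : Prop :=
  forall x, subterm (Var x) t -> forall a, G0 a -> rootl (sx s x) <> Some a.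
Definition P2 (s : subst L) (t : term L) : Prop :=
  forall X t0, subterm (CVar X t0) t -> sX s X <> Omega L /\
    forall a f, G0 a -> G1 f -> rootl (apply s t0) = Some a -> ~ hole_parent (sX s X) f.

Definition mycross (T : atree L) (f a : L) : Prop :=
  exists o ts o' ds,
    asubtree (anode (Some f) o ts) T /\ In (anode (Some a) o' ds) ts /\
    ~ explicit_occ o o' /\ ~ implicit_occ o o'.

Fixpoint mygo (s : subst L) (p : list nat) (i : nat) (l : list (term L)) : list (atree L) :=
  match l with
  | [] => []
  | t' :: l' => aeval s (p ++ [i]) t' :: mygo s p (S i) l'
  end.

Lemma aeval_App s p f ts : aeval s p (App f ts) = anode (Some f) Expl (mygo s p 0 ts).
Proof. simpl. f_equal. generalize 0. induction ts; simpl; intros; auto. f_equal. apply IHts. Qed.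

Lemma In_mygo s p i l c : In c (mygo s p i l) -> exists j t, In t l /\ c = aeval s (p ++ [j]) t.
Proof.
  revert i; induction l; simpl; intros i H; [contradiction|].
  destruct H as [<-|H]; eauto. destruct (IHl _ H) as [j [t [Ht ->]]]; eauto.
Qed.

Lemma asub_ann o g N : asubtree N (ann o g) -> exists g', gsub g' g /\ N = ann o g'.
Proof.
  revert N. induction g as [l ts IH] using gtree_ind'. intros N H. simpl in H.
  inversion H as [|? ? ? ? ? H2 H3]; subst.
  - exists (gnode l ts); split; [constructor|reflexivity].
  - apply in_map_iff in H2. destruct H2 as [c [<- Hc]]. rewrite Forall_forall in IH.
    destruct (IH c Hc N H3) as [g' [Hg ->]]. exists g'; split; auto. econstructor; eauto.
Qed.

Lemma aplug_sub C R N : asubtree N (aplug C R) -> asubtree N R \/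
  exists (f : L) o cs, asubtree (anode (Some f) o cs) C /\ N = anode (Some f) o (map (fun c => aplug c R) cs).
Proof.
  revert N. induction C as [l o ts IH] using atree_ind'. intros N H. destruct l as [f|]; simpl in H; auto.
  inversion H as [|? ? ? ? ? H2 H3]; subst.
  - right. exists f, o, ts. split; auto. constructor.
  - apply in_map_iff in H2. destruct H2 as [c [<- Hc]]. rewrite Forall_forall in IH.
    destruct (IH c Hc N H3) as [H4|[f' [o' [cs [H4 H5]]]]]; auto.
    right. exists f', o', cs. split; auto. econstructor; eauto.
Qed.

Lemma aroot_aeval s p t : arootl (aeval s p t) = rootl (apply s t).
Proof.
  revert p. induction t; intros p; simpl.
  - destruct (sx s n); reflexivity.
  - destruct (sX s n) as [[h|] cs]; simpl; auto.
  - reflexivity.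
Qed.

Lemma gctx_root g : is_gctx ar g -> g <> Omega L -> exists h cs, g = gnode (Some h) cs /\ 1 <= ar h.
Proof.
  intros [Hw Hh] Hn. inversion Hw; subst. contradiction.
  exists f, ts. split; auto. destruct (ar f) eqn:E; [|lia].
  destruct ts; [simpl in Hh; discriminate|simpl in H; lia].
Qed.

Lemma subterm_trans (a b c : term L) : subterm a b -> subterm b c -> subterm a c.
Proof.
  intros H1 H2. revert H1. induction H2; intros; auto.
  - constructor; auto.
  - econstructor; eauto.
Qed.

Lemma nocross s : valid_subst ar s -> forall t p, P1 s t -> P2 s t ->
  forall f a, G1 f -> G0 a -> ~ mycross (aeval s p t) f a.
Proof.
  intros Hv. induction t as [x|X t0 IH|g ts IH] using term_ind'; intros p HP1 HP2 f a Hf Ha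
    [o [cs [o' [ds [Hsub [Hin [Hne Hni]]]]]]].
  - simpl in Hsub. apply asub_ann in Hsub. destruct Hsub as [g' [_ Hg']].
    destruct g' as [l cs']. simpl in Hg'. injection Hg'; intros -> -> _.
    apply in_map_iff in Hin. destruct Hin as [[l2 c2] [Hc _]]. simpl in Hc. injection Hc; intros _ <- _.
    apply Hni. exists p; auto.
  - simpl in Hsub. apply aplug_sub in Hsub. destruct Hsub as [Hsub|[f' [o2 [cs2 [Hs2 HN]]]]].
    + apply (IH (p ++ [0])) with f a; auto.
      * intros x Hx. apply HP1. constructor; auto.
      * intros Y w Hw. apply HP2. constructor; auto.
      * exists o, cs, o', ds. auto.
    + inversion HN; subst. clear HN. apply asub_ann in Hs2. destruct Hs2 as [g' [Hg' Hg'e]].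
      destruct g' as [l cs']. simpl in Hg'e. inversion Hg'e; subst. clear Hg'e.
      rewrite map_map in Hin. apply in_map_iff in Hin. destruct Hin as [[[h|] ds2] [Hc Hc2]]; simpl in Hc.
      * inversion Hc; subst. apply Hni. exists p; auto.
      * destruct (HP2 X t0 (st_refl _)) as [_ H2]. apply (H2 a _ Ha Hf).
        -- rewrite <- (aroot_aeval s (p ++ [0])). rewrite Hc. reflexivity.
        -- exists cs', ds2. auto.
  - rewrite aeval_App in Hsub. rewrite Forall_forall in IH. inversion Hsub as [|? ? ? ? ? H1 H2]; subst.
    + apply In_mygo in Hin. destruct Hin as [j [t [Ht Hc]]].
      destruct t as [x|Y w|g' ts'].
      * simpl in Hc. destruct (sx s x) as [l2 cs2] eqn:E. simpl in Hc. inversion Hc; subst.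
        apply (HP1 x (st_app _ _ Ht (st_refl _)) a Ha). rewrite E. reflexivity.
      * destruct (HP2 Y w (st_app _ _ Ht (st_refl _))) as [Hne2 _].
        destruct (gctx_root _ (proj1 Hv Y) Hne2) as [h [cs2 [E Hh]]].
        simpl in Hc. rewrite E in Hc. simpl in Hc. inversion Hc; subst.
        rewrite (hG0 _ Ha) in Hh. lia.
      * simpl in Hc. inversion Hc; subst. apply Hne. split; auto.
    + apply In_mygo in H1. destruct H1 as [j [t1 [Ht ->]]].
      apply (IH t1 Ht (p ++ [j])) with f a; auto.
      * intros x Hx. apply HP1. econstructor; eauto.
      * intros Y w Hw. apply HP2. econstructor; eauto.
      * exists o, cs, o', ds. auto.
Qed.


Lemma apply_ext (s1 s2 : subst L) (t : term L) : (forall Y, sX s1 Y = sX s2 Y) ->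
  (forall x, subterm (Var x) t -> sx s1 x = sx s2 x) -> apply s1 t = apply s2 t.
Proof.
  intros HX. induction t as [x|X t IH|g ts IH] using term_ind'; intros Hx; simpl.
  - apply Hx. constructor.
  - rewrite HX, IH; auto. intros x H; apply Hx; constructor; auto.
  - f_equal. apply map_ext_in. intros t Ht. rewrite Forall_forall in IH. apply IH; auto.
    intros x H; apply Hx; econstructor; eauto.
Qed.

Lemma subch_id (s : subst L) ch : (forall x c, ch x = Some c -> sx s x = gnode (Some c) []) -> subch s ch = s.
Proof.
  intros H. destruct s as [a b]. unfold subch; simpl. f_equal. extensionality x.
  destruct (ch x) eqn:E; auto. symmetry. apply (H x l E).
Qed.

Lemma remsub_id (s : subst L) X : sX s X = Omega L -> remsub s X = s.
Proof.
  intros H. destruct s as [a b]. unfold remsub; simpl. f_equal. extensionality Y.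
  destruct (Nat.eqb_spec Y X); subst; auto.
Qed.

Lemma subterm_Var (w : term L) x : subterm w (Var x) -> w = Var x.
Proof. intros H; inversion H; auto. Qed.

Lemma subterm_inv (w t : term L) : subterm w t -> w = t \/
  (exists X t', t = CVar X t' /\ subterm w t') \/
  (exists g ts t', t = App g ts /\ In t' ts /\ subterm w t').
Proof. intros H; destruct H; eauto 10. Qed.

Lemma sub_substV ch (w t : term L) : subterm w (substV ch t) -> exists t', subterm t' t /\ w = substV ch t'.
Proof.
  revert w. induction t as [x|X t IH|g ts IH] using term_ind'; intros w H; simpl in H;
    apply subterm_inv in H; destruct H as [H|[[Y [t1 [E H]]]|[g1 [ts1 [t1 [E [Hin H]]]]]]].
  - subst. exists (Var x); split; [constructor|reflexivity].
  - destruct (ch x); discriminate.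
  - destruct (ch x); try discriminate. inversion E; subst. destruct Hin.
  - subst. exists (CVar X t); split; [constructor|reflexivity].
  - inversion E; subst. destruct (IH _ H) as [t' [H1 H2]]. exists t'; split; auto. constructor; auto.
  - discriminate.
  - subst. exists (App g ts); split; [constructor|reflexivity].
  - discriminate.
  - inversion E; subst. apply in_map_iff in Hin. destruct Hin as [t2 [<- Ht2]]. rewrite Forall_forall in IH.
    destruct (IH _ Ht2 _ H) as [t' [H3 H4]]. exists t'; split; auto. econstructor; eauto.
Qed.

Lemma substV_Var ch (t : term L) x : substV ch t = Var x -> t = Var x /\ ch x = None.
Proof. destruct t; simpl; try discriminate. destruct (ch n) eqn:E; try discriminate.
  intros H; inversion H; subst; auto. Qed.

Lemma substV_CVar ch (t : term L) Y t0 : substV ch t = CVar Y t0 -> exists t0', t = CVar Y t0' /\ t0 = substV ch t0'.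
Proof. destruct t; simpl; try discriminate. destruct (ch n); discriminate.
  intros H; inversion H; subst; eauto. Qed.

Definition popArg X (f : L) i ys (t0 : term L) : term L :=
  App f (firstn (i - 1) (map Var ys) ++ popX X f i ys t0 :: skipn (i - 1) (map Var ys)).

Lemma popX_CVar_eq X (f : L) i ys t0 : popX X f i ys (CVar X t0) = CVar X (popArg X f i ys t0).
Proof. simpl. rewrite Nat.eqb_refl. reflexivity. Qed.

Lemma sub_popX X (f : L) i ys (w t : term L) : subterm w (popX X f i ys t) ->
  (exists t', subterm t' t /\ w = popX X f i ys t') \/
  (exists t', subterm (CVar X t') t /\ w = popArg X f i ys t') \/
  (exists y, In y ys /\ w = Var y).
Proof.
  revert w. induction t as [x|Y t IH|g ts IH] using term_ind'; intros w H; simpl in H.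
  - apply subterm_Var in H; subst. left. exists (Var x); split; [constructor|reflexivity].
  - destruct (Nat.eqb_spec Y X).
    + subst. apply subterm_inv in H. destruct H as [H|[[Y1 [t1 [E H]]]|[g1 [ts1 [t1 [E [Hin H]]]]]]]; try discriminate.
      * left. exists (CVar X t). split; [constructor|]. rewrite popX_CVar_eq. auto.
      * inversion E; subst. clear E.
        apply subterm_inv in H. destruct H as [H|[[Y2 [t2 [E H]]]|[g2 [ts2 [t2 [E [H1 H2]]]]]]]; try discriminate.
        -- right; left. exists t; split; [constructor|auto].
        -- inversion E; subst. clear E. apply in_app_iff in H1. destruct H1 as [H1|[H1|H1]].
           ++ apply In_firstn, in_map_iff in H1. destruct H1 as [y [<- Hy]].
              apply subterm_Var in H2; subst. right; right; eauto.
           ++ subst. destruct (IH _ H2) as [[t' [A B]]|[[t' [A B]]|A]].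
              ** left. exists t'; split; auto. constructor; auto.
              ** right; left. exists t'; split; auto. constructor; auto.
              ** auto.
           ++ apply In_skipn, in_map_iff in H1. destruct H1 as [y [<- Hy]].
              apply subterm_Var in H2; subst. right; right; eauto.
    + apply subterm_inv in H. destruct H as [H|[[Z [t1 [E H]]]|[g1 [ts1 [t1 [E [Hin H]]]]]]]; try discriminate.
      * left. exists (CVar Y t). split; [constructor|]. simpl. destruct (Nat.eqb_spec Y X); [contradiction|auto].
      * inversion E; subst. destruct (IH _ H) as [[t' [A B]]|[[t' [A B]]|A]].
        -- left. exists t'; split; auto. constructor; auto.
        -- right; left. exists t'; split; auto. constructor; auto.
        -- auto.
  - apply subterm_inv in H. destruct H as [H|[[Z [t1 [E H]]]|[g1 [ts1 [t1 [E [H1 H2]]]]]]]; try discriminate.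
    + left. exists (App g ts); split; [constructor|auto].
    + inversion E; subst. apply in_map_iff in H1. destruct H1 as [t2 [<- Ht2]]. rewrite Forall_forall in IH.
      destruct (IH _ Ht2 _ H2) as [[t' [A B]]|[[t' [A B]]|A]].
      * left. exists t'; split; auto. econstructor; eauto.
      * right; left. exists t'; split; auto. econstructor; eauto.
      * auto.
Qed.

Lemma popX_Var X (f : L) i ys t x : popX X f i ys t = Var x -> t = Var x.
Proof. destruct t; simpl; try discriminate; auto. destruct (Nat.eqb n X); discriminate. Qed.

Lemma popX_CVar X (f : L) i ys t Y t0 : popX X f i ys t = CVar Y t0 ->
  exists t0', t = CVar Y t0' /\ ((Y = X /\ t0 = popArg X f i ys t0') \/ (Y <> X /\ t0 = popX X f i ys t0')).
Proof.
  destruct t; simpl; try discriminate. destruct (Nat.eqb_spec n X); intros H; inversion H; subst; eauto.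
Qed.

Lemma sub_remX X (w t : term L) : subterm w (remX X t) -> exists t', subterm t' t /\ w = remX X t'.
Proof.
  revert w. induction t as [x|Y t IH|g ts IH] using term_ind'; intros w H; simpl in H.
  - apply subterm_Var in H; subst. exists (Var x); split; [constructor|reflexivity].
  - destruct (Nat.eqb_spec Y X).
    + destruct (IH _ H) as [t' [A B]]. exists t'; split; auto. constructor; auto.
    + apply subterm_inv in H. destruct H as [H|[[Z [t1 [E H]]]|[g1 [ts1 [t1 [E [Hin H]]]]]]]; try discriminate.
      * exists (CVar Y t). split; [constructor|]. simpl. destruct (Nat.eqb_spec Y X); [contradiction|auto].
      * inversion E; subst. destruct (IH _ H) as [t' [A B]]. exists t'; split; auto. constructor; auto.
  - apply subterm_inv in H. destruct H as [H|[[Z [t1 [E H]]]|[g1 [ts1 [t1 [E [H1 H2]]]]]]]; try discriminate.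
    + exists (App g ts); split; [constructor|auto].
    + inversion E; subst. apply in_map_iff in H1. destruct H1 as [t2 [<- Ht2]]. rewrite Forall_forall in IH.
      destruct (IH _ Ht2 _ H2) as [t' [A B]]. exists t'; split; auto. econstructor; eauto.
Qed.

Lemma remX_Var X (t : term L) x : remX X t = Var x -> subterm (Var x) t.
Proof.
  induction t as [z|Y t IH|g ts IH] using term_ind'; simpl; intros H; try discriminate.
  - rewrite H; constructor.
  - destruct (Nat.eqb Y X); try discriminate. constructor; auto.
Qed.

Lemma remX_Var2 X (t : term L) x : remX X t = Var x ->
  (forall w, subterm (CVar X w) t -> exists g ts, w = App g ts) -> t = Var x.
Proof.
  destruct t as [z|Y t|g ts]; simpl; intros H Hw; try discriminate; auto.
  destruct (Nat.eqb_spec Y X); try discriminate. subst.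
  destruct (Hw t (st_refl _)) as [g [ts ->]]. simpl in H. discriminate.
Qed.

Lemma remX_CVar X (t : term L) Y t0 : remX X t = CVar Y t0 ->
  Y <> X /\ exists t0', subterm (CVar Y t0') t /\ t0 = remX X t0'.
Proof.
  induction t as [z|Z t IH|g ts IH] using term_ind'; simpl; intros H; try discriminate.
  destruct (Nat.eqb_spec Z X).
  - destruct (IH H) as [A [t0' [B C]]]. split; auto. exists t0'; split; auto. constructor; auto.
  - inversion H; subst. split; auto. exists t; split; auto. constructor.
Qed.


Lemma wf_sub (w t : term L) : wf_t ar t -> subterm w t -> wf_t ar w.
Proof.
  intros Hw H. induction H; auto.
  - inversion Hw; auto.
  - inversion Hw; subst. apply IHsubterm. auto.
Qed.

Lemma wf_substV ch (t : term L) : (forall x c, ch x = Some c -> ar c = 0) -> wf_t ar t -> wf_t ar (substV ch t).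
Proof.
  intros Hc H. induction H; simpl.
  - destruct (ch x) eqn:E; constructor. rewrite (Hc _ _ E); auto. intros t [].
  - constructor; auto.
  - constructor. rewrite length_map; auto. intros t Ht. apply in_map_iff in Ht.
    destruct Ht as [t' [<- Ht']]. auto.
Qed.

Lemma wf_popX X (f : L) i ys (t : term L) : 1 <= i <= ar f -> length ys = ar f - 1 ->
  wf_t ar t -> wf_t ar (popX X f i ys t).
Proof.
  intros Hi Hl H. induction H; simpl.
  - constructor.
  - destruct (Nat.eqb X0 X); constructor; auto. constructor.
    + rewrite length_app, length_firstn, length_map. simpl. rewrite length_skipn, length_map. lia.
    + intros t' Ht'. apply in_app_iff in Ht'. destruct Ht' as [Ht'|[<-|Ht']]; auto.
      * apply In_firstn, in_map_iff in Ht'. destruct Ht' as [y [<- _]]. constructor.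
      * apply In_skipn, in_map_iff in Ht'. destruct Ht' as [y [<- _]]. constructor.
  - constructor. rewrite length_map; auto. intros t Ht. apply in_map_iff in Ht.
    destruct Ht as [t' [<- Ht']]. auto.
Qed.

Lemma wf_remX X (t : term L) : wf_t ar t -> wf_t ar (remX X t).
Proof.
  intros H. induction H; simpl.
  - constructor.
  - destruct (Nat.eqb X0 X); auto. constructor; auto.
  - constructor. rewrite length_map; auto. intros t Ht. apply in_map_iff in Ht.
    destruct Ht as [t' [<- Ht']]. auto.
Qed.

Lemma holes_split (ts : list (gtree L)) : list_sum (map (@holes L) ts) = 1 ->
  exists A t B, ts = A ++ t :: B /\ holes t = 1 /\ forall x, In x (A ++ B) -> holes x = 0.
Proof.
  induction ts as [|a ts IH]; simpl; intros H; [discriminate|].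
  destruct (holes a) eqn:E.
  - destruct (IH H) as [A [t [B [-> [H1 H2]]]]]. exists (a :: A), t, B. split; auto. split; auto.
    intros x [<-|Hx]; auto.
  - assert (n = 0) by lia. subst. exists [], a, ts. split; auto. split; auto. simpl.
    intros x Hx. pose proof (list_sum_In_le _ _ (in_map (@holes L) _ _ Hx)). lia.
Qed.

Lemma gtree_eq_Omega (t : gtree L) : {t = Omega L} + {t <> Omega L}.
Proof. destruct t as [[h|] [|a l]]; try (right; discriminate). left; reflexivity. Qed.

Lemma gctx_decomp (g : gtree L) : is_gctx ar g -> g <> Omega L ->
  exists c f L1 L2, g = plug c (gnode (Some f) (L1 ++ Omega L :: L2)) /\ is_gctx ar c /\
    (forall t, In t (L1 ++ L2) -> is_gterm ar t) /\ length L1 + S (length L2) = ar f.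
Proof.
  induction g as [o ts IH] using gtree_ind'. intros [Hw Hh] Hn.
  inversion Hw as [|h ts' Hl Hts]; subst; [contradiction|]. simpl in Hh.
  destruct (holes_split ts Hh) as [A [t [B [-> [H1 H2]]]]].
  assert (Hwt : wf_g ar t) by (apply Hts, in_app_iff; simpl; auto).
  assert (HgAB : forall x, In x (A ++ B) -> is_gterm ar x).
  { intros x Hx. split; auto. apply Hts. apply in_app_iff in Hx. apply in_app_iff. simpl. tauto. }
  destruct (gtree_eq_Omega t) as [Et|Et].
  - subst. exists (Omega L), h, A, B. split; auto. split; [apply Omega_gctx|]. split; auto.
    rewrite length_app in Hl. simpl in Hl. lia.
  - rewrite Forall_forall in IH. destruct (IH t (in_or_app _ _ _ (or_intror (in_eq _ _))) (conj Hwt H1) Et)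
      as [c [f [L1 [L2 [-> [Hc [HL Hlen]]]]]]].
    exists (gnode (Some h) (A ++ c :: B)), f, L1, L2. split; [|split; [|split]]; auto.
    + simpl. f_equal. rewrite map_app. simpl. f_equal.
      * rewrite <- (map_id A) at 1. apply map_ext_in. intros x Hx. rewrite plug_ground; auto.
        apply HgAB, in_app_iff; auto.
      * f_equal. rewrite <- (map_id B) at 1. apply map_ext_in. intros x Hx. rewrite plug_ground; auto.
        apply HgAB, in_app_iff; auto.
    + split.
      * constructor. rewrite length_app in *; simpl in *; auto.
        intros x Hx. apply in_app_iff in Hx. destruct Hx as [Hx|[<-|Hx]].
        -- apply HgAB, in_app_iff; auto.
        -- apply Hc.
        -- apply HgAB, in_app_iff; auto.
      * simpl. rewrite map_app, list_sum_app. simpl. rewrite (proj2 Hc).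
        rewrite !list_sum_zero; auto; intros x Hx; apply in_map_iff in Hx; destruct Hx as [y [<- Hy]];
          apply H2, in_app_iff; auto.
Qed.


Lemma gsub_holes (N t : gtree L) : gsub N t -> holes N <= holes t.
Proof.
  induction 1; auto. simpl. pose proof (list_sum_In_le _ _ (in_map (@holes L) _ _ H)). lia.
Qed.

Lemma gsub_plug (c d N : gtree L) : gsub N (plug c d) -> gsub N d \/
  exists h cs, gsub (gnode (Some h) cs) c /\ N = gnode (Some h) (map (fun c' => plug c' d) cs).
Proof.
  revert N. induction c as [o ts IH] using gtree_ind'. intros N H. destruct o as [h|]; simpl in H; auto.
  inversion H as [|? ? ? ? H2 H3]; subst.
  - right. exists h, ts. split; auto. constructor.
  - apply in_map_iff in H2. destruct H2 as [c [<- Hc]]. rewrite Forall_forall in IH.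
    destruct (IH c Hc N H3) as [H4|[h' [cs [H4 H5]]]]; auto.
    right. exists h', cs. split; auto. econstructor; eauto.
Qed.

Lemma hole_parent_unique (c : gtree L) f L1 L2 f' :
  (forall t, In t (L1 ++ L2) -> holes t = 0) ->
  hole_parent (plug c (gnode (Some f) (L1 ++ Omega L :: L2))) f' -> f' = f.
Proof.
  intros HL [cs [ds [Hs Hin]]]. apply gsub_plug in Hs. destruct Hs as [Hs|[h [cs2 [Hs E]]]].
  - inversion Hs as [|? ? ? ? H2 H3]; subst; auto.
    assert (Hh : 1 <= holes (gnode (Some f') cs)).
    { simpl. pose proof (list_sum_In_le _ _ (in_map (@holes L) _ _ Hin)). simpl in H. lia. }
    apply in_app_iff in H2. destruct H2 as [H2|[E|H2]].
    + apply gsub_holes in H3. rewrite (HL t) in H3; [lia|apply in_app_iff; auto].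
    + subst t. inversion H3; subst. match goal with H : In _ [] |- _ => destruct H end.
    + apply gsub_holes in H3. rewrite (HL t) in H3; [lia|apply in_app_iff; auto].
  - inversion E; subst. apply in_map_iff in Hin. destruct Hin as [[[k|] e] [Hc _]]; simpl in Hc; discriminate.
Qed.

Fixpoint maxv (t : term L) : nat :=
  match t with
  | Var x => x
  | CVar _ t' => maxv t'
  | App _ ts => list_max (map maxv ts)
  end.

Lemma maxv_le (t : term L) x : subterm (Var x) t -> x <= maxv t.
Proof.
  induction t as [z|Y t IH|g ts IH] using term_ind'; intros H; simpl.
  - apply subterm_Var in H. inversion H; auto.
  - apply subterm_inv in H. destruct H as [H|[[Z [t1 [E H]]]|[g1 [ts1 [t1 [E [Hin H]]]]]]]; try discriminate.
    inversion E; subst; auto.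
  - apply subterm_inv in H. destruct H as [H|[[Z [t1 [E H]]]|[g1 [ts1 [t1 [E [Hin H]]]]]]]; try discriminate.
    inversion E; subst. rewrite Forall_forall in IH. specialize (IH _ Hin H).
    assert (maxv t1 <= list_max (map maxv ts1)).
    { pose proof (proj1 (list_max_le (map maxv ts1) _) (le_n _)). rewrite Forall_forall in H0.
      apply H0, in_map; auto. }
    lia.
Qed.

Definition maxe (e : eqn L) : nat := Nat.max (maxv (fst e)) (maxv (snd e)).

Lemma maxe_le e x : occurs_var x e -> x <= maxe e.
Proof. unfold maxe. intros [H|H]; apply maxv_le in H; lia. Qed.

Fixpoint cvars (t : term L) : list nat :=
  match t with
  | Var _ => []
  | CVar X t' => X :: cvars t'
  | App _ ts => flat_map cvars ts
  end.

Lemma cvars_spec (t : term L) X : In X (cvars t) <-> exists s, subterm (CVar X s) t.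
Proof.
  induction t as [z|Y t IH|g ts IH] using term_ind'; simpl; split.
  - intros [].
  - intros [s H]. apply subterm_Var in H. discriminate.
  - intros [->|H].
    + exists t. constructor.
    + apply IH in H. destruct H as [s H]. exists s. constructor; auto.
  - intros [s H]. apply subterm_inv in H. destruct H as [H|[[Z [t1 [E H]]]|[g1 [ts1 [t1 [E [Hin H]]]]]]]; try discriminate.
    + inversion H; auto.
    + inversion E; subst. right. apply IH. eauto.
  - intros H. apply in_flat_map in H. destruct H as [t [Ht H]]. rewrite Forall_forall in IH.
    apply IH in H; auto. destruct H as [s H]. exists s. econstructor; eauto.
  - intros [s H]. apply subterm_inv in H. destruct H as [H|[[Z [t1 [E H]]]|[g1 [ts1 [t1 [E [Hin H]]]]]]]; try discriminate.
    inversion E; subst. apply in_flat_map. exists t1. split; auto. rewrite Forall_forall in IH.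
    apply IH; eauto.
Qed.

Lemma map_nth_seq' {A} (d : A) (T : list A) b :
  map (fun y => nth (y - b) T d) (seq b (length T)) = T.
Proof.
  revert b. induction T as [|a T IH]; intros b; simpl; auto.
  rewrite Nat.sub_diag. f_equal. rewrite <- (IH (S b)) at 2. apply map_ext_in.
  intros y Hy. apply in_seq in Hy. replace (y - b) with (S (y - S b)) by lia. reflexivity.
Qed.


Definition tr (bb : bool) X (f : L) i ys (t : term L) : term L :=
  if bb then remX X (popX X f i ys t) else popX X f i ys t.

Lemma popX_allApp X (f : L) i ys (t w : term L) : subterm (CVar X w) (popX X f i ys t) ->
  exists g ts, w = App g ts.
Proof.
  intros H. apply sub_popX in H. destruct H as [[t' [_ E]]|[[t' [_ E]]|[y [_ E]]]]; try discriminate.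
  symmetry in E. apply popX_CVar in E. destruct E as [t0' [_ [[_ ->]|[Hn _]]]]; [|contradiction].
  unfold popArg. eauto.
Qed.

Lemma tr_Var bb X (f : L) i ys (t : term L) x : tr bb X f i ys t = Var x -> t = Var x.
Proof.
  unfold tr. destruct bb; intros H.
  - apply remX_Var2 in H; [apply popX_Var in H; auto|]. intros w Hw. eapply popX_allApp; eauto.
  - apply popX_Var in H; auto.
Qed.

Lemma trace_var bb X (f : L) i ys (t : term L) z : subterm (Var z) (tr bb X f i ys t) ->
  subterm (Var z) t \/ In z ys.
Proof.
  intros H. assert (H1 : subterm (Var z) (popX X f i ys t)).
  { unfold tr in H. destruct bb; auto. apply sub_remX in H. destruct H as [t1 [H1 E]].
    symmetry in E. apply remX_Var in E. eapply subterm_trans; eauto. }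
  apply sub_popX in H1. destruct H1 as [[t' [A E]]|[[t' [_ E]]|[y [Hy E]]]]; try discriminate.
  - symmetry in E. apply popX_Var in E. subst. auto.
  - inversion E; subst. auto.
Qed.

Lemma trace_cvar bb X (f : L) i ys (t : term L) Y t0 : subterm (CVar Y t0) (tr bb X f i ys t) ->
  (Y = X /\ bb = false /\ exists t1, t0 = popArg X f i ys t1) \/
  (Y <> X /\ exists t2, subterm (CVar Y t2) t /\ t0 = tr bb X f i ys t2).
Proof.
  unfold tr. destruct bb; intros H.
  - apply sub_remX in H. destruct H as [t1 [H1 E]]. symmetry in E. apply remX_CVar in E.
    destruct E as [Hne [t0' [H2 ->]]]. pose proof (subterm_trans _ _ _ H2 H1) as H3.
    apply sub_popX in H3. destruct H3 as [[t' [A E]]|[[t' [_ E]]|[y [Hy E]]]]; try discriminate.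
    symmetry in E. apply popX_CVar in E. destruct E as [t3 [-> [[? _]|[_ ->]]]]; [contradiction|].
    right. split; auto. exists t3. split; auto.
  - apply sub_popX in H. destruct H as [[t' [A E]]|[[t' [_ E]]|[y [Hy E]]]]; try discriminate.
    symmetry in E. apply popX_CVar in E. destruct E as [t3 [-> [[-> ->]|[Hne ->]]]].
    + left. eauto.
    + right. split; auto. exists t3. split; auto.
Qed.


Definition notG0root (g : gtree L) : Prop := forall a, G0 a -> rootl g <> Some a.

Record INV (A1 A2 : gtree L) (R : list nat) (e : eqn L) (s : subst L) (nv : list nat) : Prop := {
  i_valid : valid_subst ar s;
  i_a1 : apply s (fst e) = A1;
  i_a2 : apply s (snd e) = A2;
  i_wf1 : wf_t ar (fst e);
  i_wf2 : wf_t ar (snd e);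
  i_R : forall X, In X R -> sX s X <> Omega L;
  i_done : forall X t0, ~ In X R -> subterm_eq (CVar X t0) e -> sX s X <> Omega L /\
     forall a f, G0 a -> G1 f -> rootl (apply s t0) = Some a -> ~ hole_parent (sX s X) f;
  i_var : forall x, occurs_var x e -> notG0root (sx s x) \/ In x nv;
  i_cvar_var : forall Y x, subterm_eq (CVar Y (Var x)) e -> notG0root (sx s x) }.

Lemma subterm_eq_trans (w t : term L) e : subterm w t -> subterm_eq t e -> subterm_eq w e.
Proof. intros H [H1|H1]; [left|right]; eapply subterm_trans; eauto. Qed.

Lemma wf_eq_sub (w : term L) e : wf_t ar (fst e) -> wf_t ar (snd e) -> subterm_eq w e -> wf_t ar w.
Proof. intros H1 H2 [H|H]; [apply wf_sub with (fst e)|apply wf_sub with (snd e)]; auto. Qed.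

Lemma one_step A1 A2 X R e s nv : NoDup (X :: R) -> INV A1 A2 (X :: R) e s nv ->
  exists nv1 e1 s1, pop_step ar G1 G0 X e nv1 e1 /\ INV A1 A2 R e1 s1 (nv ++ nv1).
Proof.
  intros Hnd Hi. destruct Hi as [Hv Ha1 Ha2 Hw1 Hw2 HR Hdone Hvar Hcv].
  assert (HXn : sX s X <> Omega L) by (apply HR; left; auto).
  destruct (gctx_decomp _ (proj1 Hv X) HXn) as [c [f [L1 [L2 [Hg [Hc [HL Hlen]]]]]]].
  assert (HL0 : forall t, In t (L1 ++ L2) -> holes t = 0) by (intros t Ht; apply (HL t Ht)).
  assert (HnX : forall Y, In Y R -> Y <> X) by (intros Y HY ->; inversion Hnd; auto).
  destruct (classic (G1 f /\ has_Xa G0 X e)) as [Hpop|Hnpop].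
  -
    destruct Hpop as [Hf HXa].
    set (T := L1 ++ L2). set (b0 := S (maxe e)). set (ys := seq b0 (length T)).
    set (i := S (length L1)).
    set (bb := if gtree_eq_Omega c then true else false).
    set (s' := Subst (fun Y => if Nat.eqb Y X then c else sX s Y)
                     (fun y => if andb (b0 <=? y) (y <? b0 + length T) then nth (y - b0) T (Omega L) else sx s y)%bool).
    assert (Hsx : forall y, y < b0 -> sx s' y = sx s y).
    { intros y Hy. unfold s'; cbn [sx]. destruct (Nat.leb_spec b0 y); [lia|reflexivity]. }
    assert (HsX : forall Y, Y <> X -> sX s' Y = sX s Y).
    { intros Y HY. unfold s'; cbn [sX]. destruct (Nat.eqb_spec Y X); [contradiction|reflexivity]. }
    assert (Hv' : valid_subst ar s').
    { split; unfold s'; cbn [sX sx].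
      - intros Y. destruct (Nat.eqb Y X); auto. apply (proj1 Hv).
      - intros y. destruct (Nat.leb_spec b0 y); destruct (Nat.ltb_spec y (b0 + length T)); cbn [andb];
          try apply (proj2 Hv). apply HL. apply nth_In. unfold T, b0 in *; lia. }
    assert (Hmap : map (sx s') ys = T).
    { transitivity (map (fun y => nth (y - b0) T (Omega L)) (seq b0 (length T))); [|apply map_nth_seq'].
      apply map_ext_in. intros y Hy.
      apply in_seq in Hy. unfold s'; cbn [sx]. destruct (Nat.leb_spec b0 y); [|lia].
      destruct (Nat.ltb_spec y (b0 + length T)); [reflexivity|lia]. }
    assert (Hmid : mid f i (map (sx s') ys) = gnode (Some f) (L1 ++ Omega L :: L2)).
    { rewrite Hmap. unfold mid, i, T. simpl. rewrite Nat.sub_0_r. f_equal.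
      rewrite firstn_app, skipn_app, Nat.sub_diag, firstn_all, skipn_all. simpl.
      rewrite app_nil_r. reflexivity. }
    assert (Htr : forall t, (forall x, subterm (Var x) t -> x < b0) ->
                  apply s' (tr bb X f i ys t) = apply s t).
    { intros t Ht. assert (E : apply s' (popX X f i ys t) = apply s t).
      { rewrite apply_popX by (intros y; apply (proj2 Hv' y)). apply apply_ext.
        - intros Y. change (sX (popsub s' X f i ys) Y) with
            (if Nat.eqb Y X then plug (sX s' X) (mid f i (map (sx s') ys)) else sX s' Y).
          rewrite Hmid. destruct (Nat.eqb_spec Y X).
          + subst. rewrite Hg. unfold s'; cbn [sX]. rewrite Nat.eqb_refl; auto.
          + apply HsX; auto.
        - intros x Hx. change (sx (popsub s' X f i ys) x) with (sx s' x). apply Hsx. auto. }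
      unfold tr, bb. destruct (gtree_eq_Omega c) as [Ec|Ec]; auto.
      rewrite apply_remX, remsub_id; auto. simpl. rewrite Nat.eqb_refl. auto. }
    assert (Hocc : forall x, occurs_var x e -> x < b0).
    { intros x Hx. apply maxe_le in Hx. unfold b0. lia. }
    assert (Hsub1 : forall t, subterm t (fst e) -> forall x, subterm (Var x) t -> x < b0).
    { intros t Ht x Hx. apply Hocc. left. eapply subterm_trans; eauto. }
    assert (Hsub2 : forall t, subterm t (snd e) -> forall x, subterm (Var x) t -> x < b0).
    { intros t Ht x Hx. apply Hocc. right. eapply subterm_trans; eauto. }
    assert (Hsube : forall t, subterm_eq t e -> forall x, subterm (Var x) t -> x < b0).
    { intros t [Ht|Ht]; [apply Hsub1|apply Hsub2]; auto. }
    exists ys, (map_eq (tr bb X f i ys) e), s'. split.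
    + exists f, bb, (map_eq (popX X f i ys) e). split.
      * left. split; auto. split; auto. exists i. unfold i, ys. rewrite length_seq.
        unfold T. rewrite length_app. split; [lia|]. split; [lia|]. split; [apply seq_NoDup|].
        split; auto. intros y Hy Ho. apply in_seq in Hy. apply Hocc in Ho. lia.
      * unfold bb, tr. destruct (gtree_eq_Omega c); reflexivity.
    + assert (Htrs : forall t Y t0, subterm t (fst e) \/ subterm t (snd e) -> subterm (CVar Y t0) (tr bb X f i ys t) ->
         (Y = X /\ bb = false /\ exists t1, t0 = popArg X f i ys t1) \/
         (Y <> X /\ exists t2, subterm_eq (CVar Y t2) e /\ t0 = tr bb X f i ys t2)).
      { intros t Y t0 Ht H. apply trace_cvar in H. destruct H as [H|[Hne [t2 [H1 H2]]]]; auto.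
        right. split; auto. exists t2. split; auto. eapply subterm_eq_trans; eauto. }
      assert (Htrv : forall t z, subterm t (fst e) \/ subterm t (snd e) -> subterm (Var z) (tr bb X f i ys t) ->
         occurs_var z e \/ In z ys).
      { intros t z Ht H. apply trace_var in H. destruct H; auto. left. eapply subterm_eq_trans; eauto. }
      assert (Hdone' : forall Y t0, ~ In Y R -> subterm_eq (CVar Y t0) (map_eq (tr bb X f i ys) e) ->
         sX s' Y <> Omega L /\
         forall a g, G0 a -> G1 g -> rootl (apply s' t0) = Some a -> ~ hole_parent (sX s' Y) g).
      { intros Y t0 HY Hs. assert (Hs' : exists t, (subterm t (fst e) \/ subterm t (snd e)) /\
           subterm (CVar Y t0) (tr bb X f i ys t)).
        { destruct Hs as [Hs|Hs]; [exists (fst e); split; [left; constructor|exact Hs]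
           |exists (snd e); split; [right; constructor|exact Hs]]. }
        destruct Hs' as [t [Ht Hs']]. apply Htrs in Hs'; auto.
        destruct Hs' as [[-> [Hbb [t1 ->]]]|[Hne [t2 [H2 ->]]]].
        - simpl. rewrite Nat.eqb_refl. split.
          + unfold bb in Hbb. destruct (gtree_eq_Omega c); [discriminate|auto].
          + intros a g Ha Hgg Hr. simpl in Hr. inversion Hr; subst.
            apply hG0 in Ha. apply hG1 in Hf. lia.
        - rewrite HsX by auto. rewrite Htr by (apply Hsube; apply subterm_eq_trans with (CVar Y t2); [apply st_cvar; constructor|exact H2]).
          apply Hdone; auto. intros [E|E]; auto. }
      constructor; auto.
      * simpl. rewrite Htr; auto. apply Hsub1. constructor.
      * simpl. rewrite Htr; auto. apply Hsub2. constructor.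
      * simpl. unfold tr; destruct bb; [apply wf_remX|]; apply wf_popX; auto;
          unfold i, ys, T; rewrite ?length_seq, ?length_app; lia.
      * simpl. unfold tr; destruct bb; [apply wf_remX|]; apply wf_popX; auto;
          unfold i, ys, T; rewrite ?length_seq, ?length_app; lia.
      * intros Y HY. rewrite HsX by auto. apply HR. right; auto.
      * intros x Hx. assert (Hx' : occurs_var x e \/ In x ys).
        { destruct Hx as [Hx|Hx]; [apply Htrv with (fst e); [left; constructor|exact Hx]
           |apply Htrv with (snd e); [right; constructor|exact Hx]]. }
        destruct Hx' as [Hx'|Hx'].
        -- destruct (Hvar x Hx') as [H|H]; [left|right; apply in_app_iff; auto].
           rewrite Hsx; auto.
        -- right. apply in_app_iff; auto.
      * intros Y x Hx. assert (Hs' : exists t, (subterm t (fst e) \/ subterm t (snd e)) /\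
           subterm (CVar Y (Var x)) (tr bb X f i ys t)).
        { destruct Hx as [Hs|Hs]; [exists (fst e); split; [left; constructor|exact Hs]
           |exists (snd e); split; [right; constructor|exact Hs]]. }
        destruct Hs' as [t [Ht Hs']]. apply Htrs in Hs'; auto.
        destruct Hs' as [[-> [Hbb [t1 E]]]|[Hne [t2 [H2 E]]]]; [discriminate|].
        symmetry in E. apply tr_Var in E. subst t2. rewrite Hsx.
        -- apply (Hcv Y x H2).
        -- apply Hocc. eapply subterm_eq_trans; eauto. constructor. constructor.
  -
    exists [], e, s. split.
    + exists f, false, e. split; auto.
    + rewrite app_nil_r. constructor; auto.
      * intros Y HY. apply HR. right; auto.
      * intros Y t0 HY Hs. destruct (Nat.eq_dec Y X) as [->|Hne].
        -- split; auto. intros a g Ha Hgg Hr Hhp.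
           rewrite Hg in Hhp. apply hole_parent_unique in Hhp; auto. subst g.
           apply Hnpop. split; auto. exists a. split; auto.
           destruct t0 as [x|Z w|a' ts].
           ++ exfalso. apply (Hcv X x Hs a Ha). exact Hr.
           ++ exfalso. assert (HZ : sX s Z <> Omega L).
              { destruct (in_dec Nat.eq_dec Z (X :: R)) as [HZ|HZ]; [apply HR; auto|].
                apply (Hdone Z w HZ). eapply subterm_eq_trans; eauto. constructor. constructor. }
              destruct (gctx_root _ (proj1 Hv Z) HZ) as [h [cs [E Hh]]].
              simpl in Hr. rewrite E in Hr. simpl in Hr. inversion Hr; subst.
              apply hG0 in Ha. lia.
           ++ simpl in Hr. inversion Hr; subst.
              assert (Hw : wf_t ar (App a ts)).
              { apply wf_eq_sub with e; auto. eapply subterm_eq_trans; eauto. constructor. constructor. }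
              inversion Hw as [| |? ? Hl' _]; subst. rewrite (hG0 _ Ha) in Hl'.
              destruct ts; [auto|discriminate].
        -- apply Hdone; auto. intros [E|E]; auto.
Qed.


Lemma pop_iter A1 A2 R : NoDup R -> forall e s nv, INV A1 A2 R e s nv ->
  exists nv' e2 s2, pop_all ar G1 G0 R e nv' e2 /\ INV A1 A2 [] e2 s2 (nv ++ nv').
Proof.
  induction R as [|X R IH]; intros Hnd e s nv Hi.
  - exists [], e, s. split; [constructor|]. rewrite app_nil_r; auto.
  - destruct (one_step _ _ _ _ _ _ _ Hnd Hi) as [nv1 [e1 [s1 [Hst Hi1]]]].
    inversion Hnd; subst.
    destruct (IH H2 _ _ _ Hi1) as [nv' [e2 [s2 [Hpa Hi2]]]].
    exists (nv1 ++ nv'), e2, s2. split.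
    + econstructor; eauto.
    + rewrite app_assoc; auto.
Qed.

Definition chG (g : gtree L) : option L :=
  match g with
  | gnode (Some c) [] => if excluded_middle_informative (G0 c) then Some c else None
  | _ => None
  end.

Lemma chG_some g c : chG g = Some c -> G0 c /\ g = gnode (Some c) [].
Proof.
  destruct g as [[h|] [|z l]]; simpl; try discriminate.
  destruct (excluded_middle_informative (G0 h)); intros E; inversion E; subst; auto.
Qed.

Lemma chG_none g : is_gterm ar g -> chG g = None -> notG0root g.
Proof.
  intros [Hw _] Hc a Ha Hr. destruct g as [l cs]. simpl in Hr. subst l.
  inversion Hw as [|? ? Hl _]; subst. rewrite (hG0 _ Ha) in Hl. destruct cs; [|discriminate].
  simpl in Hc. destruct (excluded_middle_informative (G0 a)); [discriminate|contradiction].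
Qed.

Lemma restrict_some nv ch x (c : L) : restrict nv ch x = Some c -> ch x = Some c.
Proof. unfold restrict. destruct existsb; auto. discriminate. Qed.

Lemma restrict_none nv (ch : nat -> option L) x : In x nv -> restrict nv ch x = None -> ch x = None.
Proof.
  unfold restrict. intros H. replace (existsb (Nat.eqb x) nv) with true; auto.
  symmetry. apply existsb_exists. exists x. split; auto. apply Nat.eqb_refl.
Qed.

Lemma apply_substV_id (s : subst L) ch t : (forall x c, ch x = Some c -> sx s x = gnode (Some c) []) ->
  apply s (substV ch t) = apply s t.
Proof. intros H. rewrite apply_substV, subch_id; auto. Qed.

Lemma partB u v s : wf_t ar u -> wf_t ar v -> nonempty_solution ar s (u, v) ->
  exists (u' v' : term L) (s' : subst L),
    proc ar G1 G0 (u, v) (u', v') /\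
    nonempty_solution ar s' (u', v') /\
    apply s' u' = apply s u /\
    ~ (exists f a, G1 f /\ G0 a /\ crossing_pair ar s' (u', v') f a).
Proof.
  intros Hu Hv [[Hvs Hsol] Hne]. simpl in Hsol.
  set (ch1 := fun x => chG (sx s x)).
  assert (Hch1 : forall x c, ch1 x = Some c -> G0 c /\ sx s x = gnode (Some c) []).
  { intros x c E. apply chG_some; auto. }
  set (e1 := map_eq (substV ch1) (u, v)).
  set (ord := nodup Nat.eq_dec (cvars u ++ cvars v)).
  assert (Hord : forall X, In X ord <-> occurs_cvar X (u, v)).
  { intros X. unfold ord. rewrite nodup_In, in_app_iff, !cvars_spec. unfold occurs_cvar, subterm_eq.
    simpl. split.
    - intros [[t H]|[t H]]; exists t; auto.
    - intros [t [H|H]]; [left|right]; exists t; auto. }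
  assert (Hi : INV (apply s u) (apply s v) ord e1 s []).
  { constructor; auto.
    - simpl. apply apply_substV_id. intros x c E; apply Hch1; auto.
    - simpl. apply apply_substV_id. intros x c E; apply Hch1; auto.
    - simpl. apply wf_substV; auto. intros x c E. apply hG0, Hch1 with x; auto.
    - simpl. apply wf_substV; auto. intros x c E. apply hG0, Hch1 with x; auto.
    - intros X HX. apply Hne. apply Hord; auto.
    - intros X t0 HX Hs. exfalso. apply HX. apply Hord.
      destruct Hs as [Hs|Hs]; simpl in Hs; apply sub_substV in Hs; destruct Hs as [t' [Ht' E]];
        symmetry in E; apply substV_CVar in E; destruct E as [t0' [-> _]];
        exists t0'; [left|right]; auto.
    - intros x Hx. left. apply chG_none. apply (proj2 Hvs).
      destruct Hx as [Hs|Hs]; simpl in Hs; apply sub_substV in Hs; destruct Hs as [t' [Ht' E]];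
        symmetry in E; apply substV_Var in E; destruct E as [_ E]; exact E.
    - intros Y x Hx. apply chG_none. apply (proj2 Hvs).
      assert (Hs : subterm_eq (Var x) e1) by (eapply subterm_eq_trans; eauto; constructor; constructor).
      destruct Hs as [Hs|Hs]; simpl in Hs; apply sub_substV in Hs; destruct Hs as [t' [Ht' E]];
        symmetry in E; apply substV_Var in E; destruct E as [_ E]; exact E. }
  destruct (pop_iter _ _ _ (NoDup_nodup _ _) _ _ _ Hi) as [nv [e2 [s2 [Hpa Hi2]]]].
  simpl in Hi2. destruct Hi2 as [Hv2 Ha1 Ha2 Hw1 Hw2 _ Hdone Hvar Hcv].
  set (ch3 := fun x => chG (sx s2 x)).
  set (ch := restrict nv ch3).
  assert (Hch : forall x c, ch x = Some c -> sx s2 x = gnode (Some c) []).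
  { intros x c E. apply restrict_some in E. apply chG_some in E. tauto. }
  assert (Hside : forall t, (forall w, subterm w t -> subterm_eq w e2) ->
            P1 s2 (substV ch t) /\ P2 s2 (substV ch t) /\
            (forall X t0, subterm (CVar X t0) (substV ch t) -> sX s2 X <> Omega L)).
  { intros t Ht. split; [|split].
    - intros x Hx a Ha. apply sub_substV in Hx. destruct Hx as [t' [Ht' E]].
      symmetry in E. apply substV_Var in E. destruct E as [-> E].
      destruct (Hvar x (Ht _ Ht')) as [H|H]; [apply H; auto|].
      apply restrict_none in E; auto. apply chG_none in E; [apply E; auto|apply (proj2 Hv2)].
    - intros X t0 Hx. apply sub_substV in Hx. destruct Hx as [t' [Ht' E]].
      symmetry in E. apply substV_CVar in E. destruct E as [t0' [-> ->]].
      rewrite apply_substV_id by exact Hch. apply Hdone; auto.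
    - intros X t0 Hx. apply sub_substV in Hx. destruct Hx as [t' [Ht' E]].
      symmetry in E. apply substV_CVar in E. destruct E as [t0' [-> ->]].
      apply (Hdone X t0'); auto. }
  destruct (Hside (fst e2)) as [P1u [P2u Cu]]. { intros w Hw; left; auto. }
  destruct (Hside (snd e2)) as [P1v [P2v Cv]]. { intros w Hw; right; auto. }
  exists (substV ch (fst e2)), (substV ch (snd e2)), s2. split; [|split; [|split]].
  - exists ch1, ord, e1, e2, nv, ch3. split; [intros x c E; apply Hch1 with x; auto|].
    split; auto. split; [apply NoDup_nodup|]. split; auto. split; auto.
    split; [intros x c E; apply chG_some in E; tauto|]. reflexivity.
  - split; [split; auto|].
    + simpl. rewrite !apply_substV_id by exact Hch. rewrite Ha1, Ha2. auto.
    + intros X [t0 [Hs|Hs]]; simpl in Hs; [apply (Cu X t0 Hs)|apply (Cv X t0 Hs)].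
  - rewrite apply_substV_id by exact Hch. auto.
  - intros [f [a [Hf [Ha [Hc|Hc]]]]]; destruct Hc as [_ [_ Hc]]; simpl in Hc.
    + apply (nocross s2 Hv2 _ [] P1u P2u f a Hf Ha). exact Hc.
    + apply (nocross s2 Hv2 _ [] P1v P2v f a Hf Ha). exact Hc.
Qed.

End Main.

Theorem lemma5p3 (L : Type) (ar : L -> nat) (G1 G0 : L -> Prop)
  (hG1 : forall f, G1 f -> 1 <= ar f)
  (hG0 : forall c, G0 c -> ar c = 0)
  (u v : term L)
  (hu : wf_t ar u) (hv : wf_t ar v) :
  (forall u' v' : term L,
     proc ar G1 G0 (u, v) (u', v') ->
     (exists s' : subst L, solution ar s' (u', v')) ->
     exists s : subst L, solution ar s (u, v)) /\
  (forall s : subst L,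
     nonempty_solution ar s (u, v) ->
     exists (u' v' : term L) (s' : subst L),
       proc ar G1 G0 (u, v) (u', v') /\
       nonempty_solution ar s' (u', v') /\
       apply s' u' = apply s u /\
       ~ (exists f a, G1 f /\ G0 a /\ crossing_pair ar s' (u', v') f a)).
Proof.
  split.
  - intros u' v'. apply (partA L ar G1 G0 hG0).
  - intros s Hs. apply (partB L ar G1 G0 hG1 hG0); auto.
Qed.
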